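(* Let $k\ge4$ be even and let $(s_1,t_1\mid s_2,t_2\mid s_3,t_3)$ be a triple overlap in $\mathbb{C}$ with all $s_m,t_m\in\{1,\dots,k/2\}$, $s_1<s_2<s_3$ and $s_1<t_1$. Then $s_m<t_m$ for $m=1,2,3$ and $t_1<t_2<t_3$.
   Context: $\phi=\exp(2\pi\mathrm{i}/k)$, $\mathbf{k}=\{1,\dots,k-1\}$, $\mathbf{k}_0=\{0,\dots,k-1\}$. A quadruple $(i,j\mid s,t)\in\mathbf{k}^4$ with $i\ne s$ is an overlap if $\phi^\omega(\phi^j-1)(\phi^s-1)=(\phi^i-1)(\phi^t-1)$ for some $\omega\in\mathbf{k}_0$; it is trivial if one of $i\equiv\pm j$, $j\equiv\pm t$, $t\equiv\pm s$, $s\equiv\pm i\pmod k$ holds, nontrivial otherwise. $\mathcal{O}(\mathbb{C},k)$ is the set of nontrivial overlaps. A triple overlap $(s_1,t_1\mid s_2,t_2\mid s_3,t_3)$ (with $s_m,t_m\in\mathbf{k}$) means that $(s_1,t_1\mid s_2,t_2)$, $(s_2,t_2\mid s_3,t_3)$ and $(s_1,t_1\mid s_3,t_3)$ all belong to $\mathcal{O}(\mathbb{C},k)$. *)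

(* Defs.v *)
From mathcomp Require Import all_boot all_algebra.
From mathcomp Require Import complex.
From mathcomp Require Import Rstruct.
From Stdlib Require Import Reals.
Import GRing.Theory.

(* phi = exp(2 pi i / k) = cos(2 pi / k) + i sin(2 pi / k) in C = R[i],
   with R the Stdlib reals (a real-closed field via Rstruct). *)
Definition phi (k : nat) : complex R :=
  ((cos (2 * PI / INR k))%R +i* (sin (2 * PI / INR k))%R)%C.

Definition inK (k i : nat) : bool := (0 < i) && (i < k).

Definition pm_cong (k i j : nat) : bool :=
  (i == j %[mod k])%nat || ((i + j) %% k == 0)%nat.

Section Ov.
Local Open Scope ring_scope.
Definition overlap (k i j s t : nat) : Prop :=
  [/\ [&& inK k i, inK k j, inK k s & inK k t], (i != s)%nat &
      (exists omega : nat, (omega < k)%nat /\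
        (phi k ^+ omega * (phi k ^+ j - 1) * (phi k ^+ s - 1)
         = (phi k ^+ i - 1) * (phi k ^+ t - 1)))].

End Ov.

Definition trivial_overlap (k i j s t : nat) : bool :=
  [|| pm_cong k i j, pm_cong k j t, pm_cong k t s | pm_cong k s i].

Definition nontriv_overlap (k i j s t : nat) : Prop :=
  overlap k i j s t /\ ~~ trivial_overlap k i j s t.

Definition triple_overlap (k s1 t1 s2 t2 s3 t3 : nat) : Prop :=
  [/\ nontriv_overlap k s1 t1 s2 t2,
      nontriv_overlap k s2 t2 s3 t3 &
      nontriv_overlap k s1 t1 s3 t3].

(* Main.v *)
Require Import Defs.
From mathcomp Require Import all_boot all_algebra complex Rstruct.
From Stdlib Require Import Reals Lra Lia.
Import GRing.Theory Num.Theory.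

Definition N (z : complex R) : R := Rplus (Rmult (complex.Re z) (complex.Re z)) (Rmult (complex.Im z) (complex.Im z)).
Ltac tostd := rewrite -?RmultE -?RplusE -?RminusE -?RoppE -?R0E -?R1E.
Definition th k := Rdiv (Rmult 2 PI) (INR k).
Definition g k a := Rminus 1 (cos (Rmult (INR a) (th k))).

Section C.
Local Open Scope ring_scope.
Lemma NM (x y : complex R) : N (x * y) = Rmult (N x) (N y).
Proof. case: x => a b; case: y => c d; rewrite /N /=. tostd. ring. Qed.

Lemma mulcE (a b c d : R) : (Complex a b) * (Complex c d) = Complex (a*c - b*d) (a*d + b*c).
Proof. by []. Qed.

Lemma phiX k n : phi k ^+ n = Complex (cos (Rmult (INR n) (th k))) (sin (Rmult (INR n) (th k))).
Proof.
elim: n => [|n IH].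
  rewrite expr0 /= Rmult_0_l cos_0 sin_0 //.
rewrite exprS IH S_INR /phi mulcE. tostd. rewrite Rmult_plus_distr_r Rmult_1_l.
rewrite (Rplus_comm _ (th k)) cos_plus sin_plus /th. f_equal; ring.
Qed.

Lemma Nphi1 k a : N (phi k ^+ a - 1) = Rmult 2 (g k a).
Proof.
rewrite phiX /N /g /=. tostd. have := sin2_cos2 (Rmult (INR a) (th k)). unfold Rsqr. lra.
Qed.

Lemma Nphi k a : N (phi k ^+ a) = R1.
Proof.
rewrite phiX /N /=. have := sin2_cos2 (Rmult (INR a) (th k)). unfold Rsqr. tostd. lra.
Qed.

Lemma rel k i j s t : overlap k i j s t -> Rmult (g k j) (g k s) = Rmult (g k i) (g k t).
Proof.
case=> _ _ [w [_ E]].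
have := congr1 N E. rewrite !NM !Nphi1 Nphi. tostd. lra.
Qed.
End C.

Section Rl.
Local Open Scope R_scope.

Lemma ang_le (k a : nat) : (0 < k)%nat -> (a.*2 <= k)%nat -> 0 <= INR a * th k <= PI.
Proof.
move=> k0 ak.
have Hk : 0 < INR k by apply: lt_0_INR; apply/ltP.
have Ha : 2 * INR a <= INR k.
  have : (a.*2 <= k)%coq_nat by apply/leP.
  rewrite -addnn => /le_INR. rewrite plus_INR. lra.
have Ha0 := pos_INR a. have := PI_RGT_0 => Hpi.
rewrite /th; split.
  apply: Rmult_le_pos => //. apply: Rmult_le_pos; [lra|]. apply/Rlt_le/Rinv_0_lt_compat. lra.
apply (Rmult_le_reg_r (INR k)) => //.
replace (INR a * (2 * PI / INR k) * INR k) with (2 * INR a * PI) by (field; lra).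
nra.
Qed.

Lemma g_lt (k a b : nat) : (0 < k)%nat -> (b.*2 <= k)%nat -> (a < b)%nat -> g k a < g k b.
Proof.
move=> k0 bk ab.
have ak : (a.*2 <= k)%nat by apply: leq_trans bk; rewrite leq_double ltnW.
have [A1 A2] := @ang_le k a k0 ak. have [B1 B2] := @ang_le k b k0 bk.
have Hk : 0 < INR k by apply: lt_0_INR; apply/ltP.
have : INR a * th k < INR b * th k.
  apply Rmult_lt_compat_r. rewrite /th. apply: Rdiv_lt_0_compat => //. have := PI_RGT_0. lra.
  by apply/lt_INR/ltP.
move=> H. have := cos_decreasing_1 _ _ A1 A2 B1 B2 H. rewrite /g. lra.
Qed.

Lemma g_le (k a b : nat) : (0 < k)%nat -> (b.*2 <= k)%nat -> (a <= b)%nat -> g k a <= g k b.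
Proof.
move=> k0 bk; rewrite leq_eqVlt => /orP [/eqP -> | ab]; first lra.
by apply/Rlt_le/g_lt.
Qed.

Lemma g_pos (k a : nat) : (0 < k)%nat -> (a.*2 <= k)%nat -> (0 < a)%nat -> 0 < g k a.
Proof.
move=> k0 ak a0. have := @g_lt k _ _ k0 ak a0. rewrite /g /= Rmult_0_l cos_0. lra.
Qed.

Lemma key (k i j s t : nat) : (0 < k)%nat -> overlap k i j s t ->
  (0 < i)%nat -> (j.*2 <= k)%nat -> (s.*2 <= k)%nat -> (t.*2 <= k)%nat ->
  (i < s)%nat -> (i < j)%nat -> (j < t)%nat /\ (s < t)%nat.
Proof.
move=> k0 /rel E i0 jk sk tk isl ij.
have ik : (i.*2 <= k)%nat by apply: leq_trans sk; rewrite leq_double ltnW.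
have gi := @g_pos k _ k0 ik i0.
have gj := @g_pos k _ k0 jk (leq_ltn_trans (leq0n _) ij).
have gs := @g_pos k _ k0 sk (leq_ltn_trans (leq0n _) isl).
have gis := @g_lt k _ _ k0 sk isl. have gij := @g_lt k _ _ k0 jk ij.
split.
  case: (leqP t j) => // tj. have := @g_le k _ _ k0 jk tj. nra.
case: (leqP t s) => // ts. have := @g_le k _ _ k0 sk ts. nra.
Qed.
End Rl.

Lemma bnd (k x : nat) : (1 <= x <= k./2)%nat -> (0 < x)%nat /\ (x.*2 <= k)%nat.
Proof.
case/andP=> h1 h2; split => //.
apply: (leq_trans (n := k./2.*2)); first by rewrite leq_double.
by rewrite -{2}(odd_double_half k) leq_addl.
Qed.

Theorem lemma35 (k s1 t1 s2 t2 s3 t3 : nat) :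
  (4 <= k)%N -> ~~ odd k ->
  triple_overlap k s1 t1 s2 t2 s3 t3 ->
  (all (fun x => (1 <= x <= k./2)%N) [:: s1; t1; s2; t2; s3; t3]) ->
  (s1 < s2 < s3)%N -> (s1 < t1)%N ->
  [/\ (s1 < t1)%N, (s2 < t2)%N, (s3 < t3)%N & (t1 < t2 < t3)%N].
Proof.
move=> k4 _ [[O1 _] [O2 _] [O3 _]] /=.
case/and5P=> /bnd [p1 b1] /bnd [q1 c1] /bnd [p2 b2] /bnd [q2 c2] /andP [/bnd [p3 b3] /andP [/bnd [q3 c3] _]].
case/andP=> l12 l23 st1.
have k0 : (0 < k)%nat by apply: leq_trans k4.
have [h1 h2] := @key k _ _ _ _ k0 O1 p1 c1 b2 c2 l12 st1.
have [h3 h4] := @key k _ _ _ _ k0 O3 p1 c1 b3 c3 (ltn_trans l12 l23) st1.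
have [h5 h6] := @key k _ _ _ _ k0 O2 p2 c2 b3 c3 l23 h2.
by split => //; rewrite h1 h5.
Qed.
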